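(* Let $\tau$ be a continuous distributive triangle function on $\Delta^+$, $\Sigma$ a $\sigma$-ring of subsets of a non-empty set $\Omega$, $\gamma$ a $\tau$-decomposable measure on $\Sigma$ that is continuous from below, and $f:\Omega\to[0,+\infty]$ a measurable function that is $\gamma$-integrable on $E\in\Sigma$. Then there exists a non-decreasing sequence $(f_n)_{n\ge1}$ of functions in $\mathcal{S}_{f,E}$ converging pointwise to $f$ such that $\int_E f\,d\gamma=\lim_{n\to\infty}\int_E f_n\,d\gamma$ (weak limit in $\Delta^+$).
   Context: $\Delta^+$ is the set of functions $F:[-\infty,+\infty]\to[0,1]$ that are non-decreasing, left-continuous on $\mathbb{R}$, with $F(x)=0$ for $x\le0$ and $F(+\infty)=1$, ordered pointwise; $\varepsilon_a(x)=1$ if $x>a$, else $0$. A triangle function is a symmetric, associative map $\tau:\Delta^+\times\Delta^+\to\Delta^+$, non-decreasing in each variable, with identity $\varepsilon_0$; $G\oplus H=\tau(G,H)$, $\bigoplus_{k=1}^nG_k=\tau(G_1,\bigoplus_{k=2}^nG_k)$. For $c\ge0$, $c\odot G=\varepsilon_0$ if $c=0$, $(c\odot G)(x)=G(x/c)$ if $c>0$; $\tau$ is distributive if $c\odot(G\oplus H)=(c\odot G)\oplus(c\odot H)$ for all $c\ge0$, $G,H$. Convergence in $\Delta^+$ is weak convergence ($G_n(x)\to G(x)$ at every continuity point $x\in\mathbb{R}$ of $G$); $\tau$ is continuous if continuous for this convergence. A $\tau$-decomposable measure on a ring $\Sigma$ is $\gamma:\Sigma\to\Delta^+$ with $\gamma_\emptyset=\varepsilon_0$,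 $\gamma_{E\cup F}=\tau(\gamma_E,\gamma_F)$ for disjoint $E,F$; continuous from below means $\gamma_{E_n}\to\gamma_E$ whenever $E_n\subseteq E_{n+1}$, $\bigcup E_n=E$ in $\Sigma$. A simple function is $\sum_{i=1}^nx_i\chi_{E_i}$, $x_i\in[0,\infty)$, $E_i\in\Sigma$ pairwise disjoint, with $\int_E f\,d\gamma=\bigoplus_{i=1}^nx_i\odot\gamma_{E\cap E_i}$. Measurable: pointwise limit of simple functions. $\mathcal{S}_{f,E}$: simple $\mathfrak f$ with $\mathfrak f\le f$ on $E$. $f$ is $\gamma$-integrable on $E$ if some $H\in\Delta^+$ satisfies $\int_E\mathfrak f\,d\gamma\ge H$ for all $\mathfrak f\in\mathcal S_{f,E}$; then $\int_Ef\,d\gamma=\inf\{\int_E\mathfrak f\,d\gamma:\mathfrak f\in\mathcal S_{f,E}\}$ in $(\Delta^+,\le)$ (left-continuous regularization of the pointwise infimum). *)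

(* Defs.v *)
From HB Require Import structures.
From mathcomp Require Import all_boot all_order all_algebra.
From mathcomp Require Import all_classical all_reals all_analysis.
Set Implicit Arguments. Unset Strict Implicit. Unset Printing Implicit Defensive.
Import Order.TTheory GRing.Theory Num.Theory.
Import numFieldNormedType.Exports.
Local Open Scope classical_set_scope.
Local Open Scope ring_scope.

Section DeltaPlus.
Variable R : realType.

Definition dfun := \bar R -> R.

Definition delta_plus (F : dfun) : Prop :=
  [/\ (forall x, 0 <= F x <= 1),
      (forall x y : \bar R, (x <= y)%E -> F x <= F y),
      (forall x : R, (fun y : R => F y%:E) @ x^'- --> F x%:E),
      (forall x : \bar R, (x <= 0)%E -> F x = 0) &
      F +oo%E = 1].

Definition dle (F G : dfun) : Prop := forall x, F x <= G x.

Definition eps (a : R) : dfun := fun x => if (a%:E < x)%E then 1 else 0.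

Definition dscal (c : R) (G : dfun) : dfun :=
  if c == 0 then eps 0 else fun x => G (x * (c^-1)%:E)%E.

Definition wconv (Gn : nat -> dfun) (G : dfun) : Prop :=
  forall x : R, {for x, continuous (fun y : R => G y%:E)} ->
    (fun n => Gn n x%:E) @ \oo --> G x%:E.

Definition triangle_function (tau : dfun -> dfun -> dfun) : Prop :=
  [/\ (forall G H, delta_plus G -> delta_plus H -> delta_plus (tau G H)),
      (forall G H, delta_plus G -> delta_plus H -> tau G H = tau H G),
      (forall G H K, delta_plus G -> delta_plus H -> delta_plus K ->
         tau G (tau H K) = tau (tau G H) K),
      (forall G G' H, delta_plus G -> delta_plus G' -> delta_plus H ->
         dle G G' -> dle (tau G H) (tau G' H) /\ dle (tau H G) (tau H G')) &
      (forall G, delta_plus G -> tau G (eps 0) = G)].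

Definition distributive_tf (tau : dfun -> dfun -> dfun) : Prop :=
  forall c G H, 0 <= c -> delta_plus G -> delta_plus H ->
    dscal c (tau G H) = tau (dscal c G) (dscal c H).

Definition continuous_tf (tau : dfun -> dfun -> dfun) : Prop :=
  forall (Gn Hn : nat -> dfun) G H,
    (forall n, delta_plus (Gn n)) -> (forall n, delta_plus (Hn n)) ->
    delta_plus G -> delta_plus H ->
    wconv Gn G -> wconv Hn H -> wconv (fun n => tau (Gn n) (Hn n)) (tau G H).

Definition dbig (tau : dfun -> dfun -> dfun) (s : seq dfun) : dfun :=
  foldr tau (eps 0) s.

End DeltaPlus.

Section Measures.
Variables (R : realType) (Omega : Type).

Definition sigma_ring_of (S : set (set Omega)) : Prop :=
  [/\ S set0,
      (forall A B, S A -> S B -> S (A `\` B)) &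
      (forall F : nat -> set Omega, (forall n, S (F n)) -> S (\bigcup_n F n))].

Definition tau_decomposable (tau : dfun R -> dfun R -> dfun R)
    (S : set (set Omega)) (gamma : set Omega -> dfun R) : Prop :=
  [/\ (forall A, S A -> delta_plus (gamma A)),
      gamma set0 = eps 0 &
      (forall A B, S A -> S B -> A `&` B = set0 ->
         gamma (A `|` B) = tau (gamma A) (gamma B))].

Definition cont_from_below (S : set (set Omega))
    (gamma : set Omega -> dfun R) : Prop :=
  forall (En : nat -> set Omega) E, (forall n, S (En n)) -> S E ->
    (forall n, En n `<=` En n.+1) -> \bigcup_n En n = E ->
    wconv (fun n => gamma (En n)) (gamma E).

(* A simple function given by a representation [:: (x_1,E_1); ...; (x_n,E_n)] *)
Definition simple_rep (S : set (set Omega)) (s : seq (R * set Omega)) : Prop :=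
  [/\ (forall p, p \in s -> 0 <= p.1),
      (forall p, p \in s -> S p.2) &
      (forall i j, (i < j < size s)%N ->
         (nth (0, set0) s i).2 `&` (nth (0, set0) s j).2 = set0)].

Definition sfval (s : seq (R * set Omega)) (w : Omega) : \bar R :=
  (\sum_(p <- s) p.1 * \1_(p.2) w)%:E.

Definition sint (tau : dfun R -> dfun R -> dfun R)
    (gamma : set Omega -> dfun R) (E : set Omega) (s : seq (R * set Omega)) : dfun R :=
  dbig tau [seq dscal p.1 (gamma (E `&` p.2)) | p <- s].

Definition SfE (S : set (set Omega)) (f : Omega -> \bar R) (E : set Omega) :
    set (seq (R * set Omega)) :=
  [set s | simple_rep S s /\ forall w, E w -> (sfval s w <= f w)%E].

Definition measurable_fn (S : set (set Omega)) (f : Omega -> \bar R) : Prop :=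
  exists sn : nat -> seq (R * set Omega), (forall n, simple_rep S (sn n)) /\
    forall w, (fun n => sfval (sn n) w) @ \oo --> f w.

Definition gamma_integrable (tau : dfun R -> dfun R -> dfun R) (S : set (set Omega))
    (gamma : set Omega -> dfun R) (f : Omega -> \bar R) (E : set Omega) : Prop :=
  exists H, delta_plus H /\ forall s, SfE S f E s -> dle H (sint tau gamma E s).

(* int_E f dgamma := inf in (Delta^+, <=) of the simple integrals:
   left-continuous regularization of the pointwise infimum. *)
Definition pinf (tau : dfun R -> dfun R -> dfun R) (S : set (set Omega))
    (gamma : set Omega -> dfun R) (f : Omega -> \bar R) (E : set Omega) (x : \bar R) : R :=
  inf [set sint tau gamma E s x | s in SfE S f E].

Definition tf_integral (tau : dfun R -> dfun R -> dfun R) (S : set (set Omega))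
    (gamma : set Omega -> dfun R) (f : Omega -> \bar R) (E : set Omega) : dfun R :=
  fun x => match x with
  | EFin r => sup [set pinf tau S gamma f E y%:E | y in [set y : R | y < r]]
  | +oo%E => 1
  | -oo%E => 0
  end.

End Measures.

(* Main.v *)
Require Import Defs.
From HB Require Import structures.
From mathcomp Require Import all_boot all_order all_algebra.
From mathcomp Require Import all_classical all_reals all_analysis.
From mathcomp Require Import lra.
Import Order.TTheory GRing.Theory Num.Theory.
Import numFieldNormedType.Exports.
Local Open Scope classical_set_scope.
Local Open Scope ring_scope.

Section Sets.
Variables (R : realType) (Omega : Type) (S : set (set Omega)).
Hypothesis hS : sigma_ring_of S.

Lemma sr0 : S set0. Proof. by case: hS. Qed.
Lemma srD A B : S A -> S B -> S (A `\` B). Proof. by case: hS => _ h _; apply: h. Qed.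
Lemma srI A B : S A -> S B -> S (A `&` B).
Proof.
move=> hA hB; have -> : A `&` B = A `\` (A `\` B).
  by apply/seteqP; split=> w /=; [case=> a b; split=> // -[]|case=> a; move/not_andP => [//|/contrapT]].
by apply: srD => //; apply: srD.
Qed.
Lemma srbigU (F : nat -> set Omega) : (forall n, S (F n)) -> S (\bigcup_n F n).
Proof. by case: hS => _ _ h; apply: h. Qed.
Lemma srU A B : S A -> S B -> S (A `|` B).
Proof.
move=> hA hB; have -> : A `|` B = \bigcup_n (if n == 0%N then A else B).
  apply/seteqP; split=> w /=; first by case=> h; [exists 0%N|exists 1%N].
  by case=> -[|n] _ /=; [left|right].
by apply: srbigU => -[|n].
Qed.
Lemma srbigI (F : nat -> set Omega) : (forall n, S (F n)) -> S (\bigcap_n F n).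
Proof.
move=> hF; have -> : \bigcap_n F n = F 0%N `\` \bigcup_n (F 0%N `\` F n).
  apply/seteqP; split=> w /=.
    by move=> h; split; [apply: h|case=> n _ []; move=> _; apply; apply: h].
  case=> h0 h n _; apply: contrapT => hn; apply: h; by exists n.
by apply: srD => //; apply: srbigU => n; apply: srD.
Qed.

Lemma simple_rep_cons x A s :
  simple_rep (R:=R) S ((x, A) :: s) <->
  [/\ 0 <= x, S A, (forall p, p \in s -> A `&` p.2 = set0) & simple_rep (R:=R) S s].
Proof.
split.
  case=> h1 h2 h3; split.
  - by have := h1 (x, A); rewrite mem_head; apply.
  - by have := h2 (x, A); rewrite mem_head; apply.
  - move=> p /(nthP (0, set0)) [j hj <-].
    by have := h3 0%N j.+1 => /=; apply.
  - split.
    + by move=> p hp; apply: h1; rewrite in_cons hp orbT.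
    + by move=> p hp; apply: h2; rewrite in_cons hp orbT.
    + by move=> i j hij; apply: (h3 i.+1 j.+1).
case=> h1 h2 h3 [k1 k2 k3]; split.
- by move=> p; rewrite in_cons => /orP [/eqP ->|] //; apply: k1.
- by move=> p; rewrite in_cons => /orP [/eqP ->|] //; apply: k2.
- move=> [|i] [|j] //=.
    by rewrite ltnS => hj; apply: h3; apply: mem_nth.
  by rewrite !ltnS => hij; apply: k3.
Qed.


Lemma simple_rep_nil : simple_rep (R:=R) S [::].
Proof. by split=> // i j; rewrite andbF. Qed.

Lemma simple_rep_diff s B : simple_rep (R:=R) S s -> S B ->
  simple_rep (R:=R) S (map (fun p => (p.1, p.2 `\` B)) s).
Proof.
move=> + hB; elim: s => [|[x A] s IH] /=; first by move=> _; apply: simple_rep_nil.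
move/simple_rep_cons => [h1 h2 h3 h4]; apply/simple_rep_cons; split => //.
- by apply: srD.
- move=> p /mapP [q hq ->] /=; have := h3 q hq.
  by move=> e; apply/seteqP; split=> w //= [[a _] [b _]]; have : (A `&` q.2) w by []; rewrite e.
- by apply: IH.
Qed.

Lemma sfval_cons (x : R) (A : set Omega) (s : seq (R * set Omega)) w :
  sfval ((x, A) :: s) w = ((x * \1_A w)%:E + sfval s w)%E.
Proof. by rewrite /sfval big_cons EFinD. Qed.

Lemma sfval_out (s : seq (R * set Omega)) w : (forall p, p \in s -> ~ p.2 w) -> sfval s w = 0%E.
Proof.
move=> h; rewrite /sfval big_seq big1 // => p hp.
by rewrite indicE memNset ?mulr0 //; apply: h.
Qed.

Lemma sfval_cases s w : simple_rep (R:=R) S s ->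
  ((forall p, p \in s -> ~ p.2 w) /\ sfval s w = 0%E) \/
  (exists p, [/\ p \in s, p.2 w & sfval s w = p.1%:E]).
Proof.
elim: s => [|[x A] s IH]; first by move=> _; left; split => //; apply: sfval_out.
move/simple_rep_cons => [h1 h2 h3 h4].
have [hA|hA] := pselect (A w).
- right; exists (x, A); split => //; first by rewrite mem_head.
  rewrite sfval_cons sfval_out /=; first by rewrite indicE mem_set // mulr1 addr0.
  move=> p hp hpw; have := h3 p hp; move/seteqP => [+ _].
  by move/(_ w) => /=; apply.
- case: (IH h4) => [[k1 k2]|[p [k1 k2 k3]]].
  + left; split; last by rewrite sfval_cons k2 indicE memNset // mulr0 addr0.
    by move=> p; rewrite in_cons => /orP [/eqP ->|/k1].
  + right; exists p; split => //; first by rewrite in_cons k1 orbT.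
    by rewrite sfval_cons k3 indicE memNset // mulr0 add0r.
Qed.

Lemma sfval_ge0 s w : simple_rep (R:=R) S s -> (0 <= sfval s w)%E.
Proof.
move=> hs; case: (@sfval_cases s w hs) => [[_ ->]|[p [k1 _ ->]]] //.
by rewrite lee_fin; case: hs => + _ _; apply.
Qed.

End Sets.

Section Delta.
Variable R : realType.
Implicit Types (G H : dfun R).

Lemma eps0_dp : delta_plus (eps (0:R)).
Proof.
rewrite /eps; split.
- by move=> x; case: ifP => _; rewrite lexx ?ler01.
- move=> x y hxy; case: ifP => h1; case: ifP => h2 //; rewrite ?ler01 //.
  by move: (@lt_le_trans _ _ x _ y h1) => /(_ hxy); rewrite h2.
- move=> x.
apply: cvg_near_cst.
  have [x0|x0] := ltP 0 x.
  + by near=> y; rewrite !lte_fin x0; suff -> : 0 < y by []; near: y; exact: nbhs_left_gt.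
  + near=> y; have yx : y <= x by near: y; exact: nbhs_left_le.
    by rewrite !lte_fin (ltNge 0 x) x0 (ltNge 0 y) (le_trans yx x0).
- by move=> x x0; case: ifP => // h; have := lt_le_trans h x0; rewrite ltxx.
- by rewrite ltry.
Unshelve. all: end_near. Qed.


Lemma dp_bnd {G} x : delta_plus G -> 0 <= G x <= 1.
Proof. by case=> h *; apply: h. Qed.
Lemma dp_mono {G} x y : delta_plus G -> (x <= y)%E -> G x <= G y.
Proof. by case=> _ h *; apply: h. Qed.
Lemma dp_le0 {G} x : delta_plus G -> (x <= 0)%E -> G x = 0.
Proof. by case=> _ _ _ h *; apply: h. Qed.

Lemma dle_eps0 G : delta_plus G -> dle G (eps 0).
Proof.
move=> hG x; rewrite /eps; case: ifP => h.
  by have /andP[] := dp_bnd x hG.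
by rewrite (dp_le0 x hG) // leNgt h.
Qed.

Lemma dscal0 G : dscal 0 G = eps 0.
Proof. by rewrite /dscal eqxx. Qed.
Lemma dscal_pos c G : 0 < c -> dscal c G = fun x => G (x * (c^-1)%:E)%E.
Proof. by move=> c0; rewrite /dscal gt_eqF. Qed.

Lemma dscal_dp c G : 0 <= c -> delta_plus G -> delta_plus (dscal c G).
Proof.
rewrite le_eqVlt => /orP [/eqP <-|c0] hG; first by rewrite dscal0; apply: eps0_dp.
rewrite dscal_pos //; split.
- by move=> x; apply: dp_bnd.
- by move=> x y hxy; apply: dp_mono => //; apply: lee_wpmul2r => //; rewrite lee_fin invr_ge0 ltW.
- move=> x.
  have -> : (fun y : R => G (y%:E * (c^-1)%:E)%E) = (fun y => G (y / c)%:E).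
    by apply: funext => y; rewrite -EFinM.
  rewrite -EFinM; case: hG => _ _ hl _ _.
  have := hl (x / c); move/cvg_at_leftP => hseq.
  apply/cvg_at_leftP => u [hu hcu].
  apply: (hseq (fun n => u n / c)); split.
  + by move=> n; rewrite ltr_pM2r // invr_gt0.
  + by apply: cvgMr_tmp.
- move=> x x0; apply: dp_le0 => //; apply: mule_le0_ge0 => //.
  by rewrite lee_fin invr_ge0 ltW.
- by rewrite gt0_mulye ?lte_fin ?invr_gt0 //; case: hG.
Qed.

Lemma dscal_eps0 c : 0 <= c -> dscal c (eps 0) = eps (0:R).
Proof.
rewrite le_eqVlt => /orP [/eqP <-|c0]; first by rewrite dscal0.
rewrite dscal_pos //; apply: funext => x; rewrite /eps lte_pdivlMr // mul0e.
done.
Qed.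

Lemma dscal_anti c d G : 0 <= c -> c <= d -> delta_plus G -> dle (dscal d G) (dscal c G).
Proof.
rewrite le_eqVlt => /orP [/eqP <-|c0] cd hG.
  by rewrite dscal0; apply: dle_eps0; apply: dscal_dp => //.
have d0 : 0 < d by apply: lt_le_trans cd.
rewrite !dscal_pos // => -[r| |] /=.
- have [r0|r0] := leP 0 r.
    apply: dp_mono => //; rewrite -!EFinM lee_fin; apply: ler_wpM2l => //.
    by rewrite lef_pV2 ?posrE.
  rewrite -EFinM (dp_le0 _ hG); first by have /andP[] := dp_bnd ((r * c^-1)%:E) hG.
  by rewrite lee_fin; apply: mulr_le0_ge0; [apply: ltW | rewrite invr_ge0 ltW].
- by rewrite !gt0_mulye ?lte_fin ?invr_gt0.
- by rewrite !gt0_mulNye ?lte_fin ?invr_gt0.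
Qed.

End Delta.

Section Sint.
Variables (R : realType) (Omega : Type) (tau : dfun R -> dfun R -> dfun R)
  (S : set (set Omega)) (gamma : set Omega -> dfun R).
Hypotheses (htau : triangle_function tau) (hdist : distributive_tf tau)
  (hS : sigma_ring_of S) (hgam : tau_decomposable tau S gamma).

Local Notation dp := (@delta_plus R).
Local Notation srep := (@simple_rep R Omega S).
Local Notation sint := (@sint R Omega tau gamma).

Lemma tau_dp {G H} : dp G -> dp H -> dp (tau G H).
Proof. by case: htau => h *; apply: h. Qed.
Lemma tauC {G H} : dp G -> dp H -> tau G H = tau H G.
Proof. by case: htau => _ h *; apply: h. Qed.
Lemma tauA {G H K} : dp G -> dp H -> dp K -> tau G (tau H K) = tau (tau G H) K.
Proof. by case: htau => _ _ h *; apply: h. Qed.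
Lemma tau0r {G} : dp G -> tau G (eps 0) = G.
Proof. by case: htau => _ _ _ _ h *; apply: h. Qed.
Lemma tau0l {G} : dp G -> tau (eps 0) G = G.
Proof. by move=> hG; rewrite tauC ?tau0r //; apply: eps0_dp. Qed.
Lemma tau_mono G G' H H' : dp G -> dp G' -> dp H -> dp H' ->
  dle G G' -> dle H H' -> dle (tau G H) (tau G' H').
Proof.
move=> hG hG' hH hH' h1 h2 x; case: htau => _ _ _ hm _.
apply: (@le_trans _ _ (tau G' H x)).
  by have [+ _] := hm G G' H hG hG' hH h1; apply.
by have [_ +] := hm H H' G' hH hH' hG' h2; apply.
Qed.
Lemma tau_AC a b c d : dp a -> dp b -> dp c -> dp d ->
  tau (tau a b) (tau c d) = tau (tau a c) (tau b d).
Proof.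
move=> ha hb hc hd.
rewrite -(tauA ha hb (tau_dp hc hd)) (tauA hb hc hd) (tauC hb hc).
by rewrite -(tauA hc hb hd) (tauA ha hc (tau_dp hb hd)).
Qed.
Lemma dscal_tau c G H : 0 <= c -> dp G -> dp H ->
  dscal c (tau G H) = tau (dscal c G) (dscal c H).
Proof. by move=> *; apply: hdist. Qed.

Lemma gam_dp A : S A -> dp (gamma A).
Proof. by case: hgam => h *; apply: h. Qed.
Lemma gam0 {A} : A = set0 -> gamma A = eps 0.
Proof. by move=> ->; case: hgam. Qed.
Lemma gam_split {A B} : S A -> S B ->
  gamma A = tau (gamma (A `&` B)) (gamma (A `\` B)).
Proof.
move=> hA hB; case: hgam => _ _ h.
rewrite -h; first congr gamma.
- by apply/seteqP; split => w /=; have := pselect (B w); tauto.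
- exact: srI.
- exact: srD.
- by apply/seteqP; split => w /=; tauto.
Qed.

Lemma sint_nil E : sint E [::] = eps 0.
Proof. by []. Qed.
Lemma sint_cons E x A s :
  sint E ((x, A) :: s) = tau (dscal x (gamma (E `&` A))) (sint E s).
Proof. by []. Qed.

Lemma sint_dp E s : S E -> srep s -> dp (sint E s).
Proof.
move=> hE; elim: s => [|[x A] s IH]; first by move=> _; apply: eps0_dp.
move/simple_rep_cons => [h1 h2 h3 h4]; rewrite sint_cons.
apply: tau_dp; last exact: IH.
by apply: dscal_dp => //; apply: gam_dp; apply: srI.
Qed.

Lemma sint_zero E s : srep s -> (forall p, p \in s -> E `&` p.2 = set0) ->
  sint E s = eps 0.
Proof.
elim: s => [|[x A] s IH] //; move/simple_rep_cons => [h1 h2 h3 h4] h.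
rewrite sint_cons IH //; last by move=> p hp; apply: h; rewrite in_cons hp orbT.
rewrite (gam0 (h (x, A) (mem_head _ _))) dscal_eps0 // tau0r //; exact: eps0_dp.
Qed.

Lemma sint_split E B s : S E -> S B -> srep s ->
  sint E s = tau (sint (E `&` B) s) (sint (E `\` B) s).
Proof.
move=> hE hB; elim: s => [|[x A] s IH]; first by move=> _; rewrite !sint_nil tau0r //; exact: eps0_dp.
move/simple_rep_cons => [h1 h2 h3 h4]; rewrite !sint_cons IH //.
have hEA : S (E `&` A) by apply: srI.
rewrite (gam_split hEA hB).
have -> : E `&` A `&` B = E `&` B `&` A by apply/seteqP; split => w /=; tauto.
have -> : E `&` A `\` B = (E `\` B) `&` A by apply/seteqP; split => w /=; tauto.
rewrite dscal_tau //; try by apply: gam_dp; do ?[assumption|apply: srD|apply: srI].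
by rewrite tau_AC //; do ?[assumption|apply: sint_dp|apply: dscal_dp|apply: gam_dp|apply: srD|apply: srI].
Qed.


Lemma sfval_nil w : sfval (R:=R) (Omega:=Omega) [::] w = 0%E.
Proof. by rewrite /sfval big_nil. Qed.

Lemma sfval_cons_in x A s w : srep ((x, A) :: s) -> A w ->
  sfval ((x, A) :: s) w = x%:E.
Proof.
move/simple_rep_cons => [h1 h2 h3 h4] hw.
rewrite sfval_cons sfval_out; first by rewrite indicE mem_set // mulr1 adde0.
move=> p hp hpw; have := h3 p hp; move/seteqP => [+ _].
by move/(_ w) => /=; apply.
Qed.

Lemma sfval_cons_out (x : R) (A : set Omega) s w : ~ A w ->
  sfval ((x, A) :: s) w = sfval s w.
Proof. by move=> hw; rewrite sfval_cons indicE memNset // mulr0 add0e. Qed.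

Lemma dle_refl (G : dfun R) : dle G G.
Proof. by move=> x. Qed.

Lemma sint_cons_in E x A s : S E -> srep ((x, A) :: s) ->
  sint (E `&` A) ((x, A) :: s) = dscal x (gamma (E `&` A)).
Proof.
move=> hE hs; have := hs; move/simple_rep_cons => [h1 h2 h3 h4].
rewrite sint_cons sint_zero //; last first.
  move=> p hp; have := h3 p hp; move/seteqP => [k _].
  by apply/seteqP; split => // w [[_ a] b]; apply: (k w).
have -> : E `&` A `&` A = E `&` A by apply/seteqP; split => w /=; tauto.
by rewrite tau0r //; apply: dscal_dp => //; apply: gam_dp; apply: srI.
Qed.

Lemma sint_cons_out E x A s : S E -> srep ((x, A) :: s) ->
  sint (E `\` A) ((x, A) :: s) = sint (E `\` A) s.
Proof.
move=> hE hs; have := hs; move/simple_rep_cons => [h1 h2 h3 h4].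
rewrite sint_cons gam0; last by apply/seteqP; split => w //= [[_ a] b].
rewrite dscal_eps0 // tau0l //; apply: sint_dp => //; exact: srD.
Qed.

Lemma sint_le_scal F t x : S F -> srep t -> 0 <= x ->
  (forall w, F w -> (x%:E <= sfval t w)%E) -> dle (sint F t) (dscal x (gamma F)).
Proof.
elim: t F => [|[y B] t IH] F hF ht x0 hx.
  rewrite sint_nil; have [[w hw]|nF] := pselect (exists w, F w).
    have := hx w hw; rewrite sfval_nil lee_fin => hx'.
    have -> : x = 0 by apply/eqP; rewrite eq_le hx' x0.
    by rewrite dscal0 => ?.
  have -> : gamma F = eps 0.
    by apply: gam0; apply/seteqP; split => // w hw; apply: nF; exists w.
  by rewrite dscal_eps0 // => ?.
have := ht; move/simple_rep_cons => [h1 h2 h3 h4].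
have hFB : S (F `&` B) by apply: srI.
have hFB' : S (F `\` B) by apply: srD.
rewrite (sint_split F B) // (gam_split hF h2) dscal_tau //; try by apply: gam_dp.
apply: tau_mono; do ?[apply: sint_dp|apply: dscal_dp|apply: gam_dp|assumption].
- rewrite sint_cons_in //.
  have [[w hw]|nF] := pselect (exists w, (F `&` B) w).
    apply: dscal_anti => //; last by apply: gam_dp.
    have : (x%:E <= y%:E)%E by rewrite -(sfval_cons_in y B t w ht hw.2); apply: hx; case: hw.
    by rewrite lee_fin.
  have -> : gamma (F `&` B) = eps 0.
    by apply: gam0; apply/seteqP; split => // w hw; apply: nF; exists w.
  by rewrite dscal_eps0 // dscal_eps0 // => ?.
- rewrite sint_cons_out //; apply: IH => // w [hw hwB].
  by rewrite -(sfval_cons_out y B t w hwB); apply: hx.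
Qed.

Lemma sint_anti E s t : S E -> srep s -> srep t ->
  (forall w, E w -> (sfval s w <= sfval t w)%E) -> dle (sint E t) (sint E s).
Proof.
elim: s E => [|[x A] s IH] E hE hs ht h.
  by rewrite sint_nil; apply: dle_eps0; apply: sint_dp.
have := hs; move/simple_rep_cons => [h1 h2 h3 h4].
have hEA : S (E `&` A) by apply: srI.
have hEA' : S (E `\` A) by apply: srD.
rewrite (sint_split E A t) // (sint_split E A ((x, A) :: s)) //.
apply: tau_mono; do ?[apply: sint_dp|assumption].
- rewrite sint_cons_in //; apply: sint_le_scal => // w [hw hwA].
  by rewrite -(sfval_cons_in x A s w hs hwA); apply: h.
- rewrite sint_cons_out //; apply: IH => // w [hw hwA].
  by rewrite -(sfval_cons_out x A s w hwA); apply: h.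
Qed.

End Sint.

Section Level.
Variables (R : realType) (Omega : Type) (S : set (set Omega)) (f : Omega -> \bar R).
Hypotheses (hS : sigma_ring_of S) (f0 : forall w, (0 <= f w)%E).
Local Notation srep := (@simple_rep R Omega S).

Lemma S_union_list (s : seq (R * set Omega)) (c : R) : (forall p, p \in s -> S p.2) ->
  S [set w | exists p, [/\ p \in s, c < p.1 & p.2 w]].
Proof.
elim: s => [|[x A] s IH] hs.
  have -> : [set w | exists p : R * set Omega, [/\ p \in [::], c < p.1 & p.2 w]] = set0.
    by apply/seteqP; split => w // [p []].
  exact: sr0.
have -> : [set w | exists p, [/\ p \in (x, A) :: s, c < p.1 & p.2 w]] =
  (if c < x then A else set0) `|` [set w | exists p, [/\ p \in s, c < p.1 & p.2 w]].
  apply/seteqP; split => w /=.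
    move=> [p []]; rewrite in_cons => /orP [/eqP -> /= cx hw|ps cp hw].
      by left; rewrite cx.
    by right; exists p.
  case.
    by case: ifP => // cx hw; exists (x, A); rewrite mem_head.
  by move=> [p [ps cp hw]]; exists p; rewrite in_cons ps orbT.
apply: srU => //; last by apply: IH => p hp; apply: hs; rewrite in_cons hp orbT.
by case: ifP => _; [apply: (hs (x, A)); rewrite mem_head|apply: sr0].
Qed.

Lemma S_sfval_gt s (c : R) : srep s -> 0 <= c ->
  S [set w | (c%:E < sfval s w)%E].
Proof.
move=> hs c0.
have -> : [set w | (c%:E < sfval s w)%E] = [set w | exists p, [/\ p \in s, c < p.1 & p.2 w]].
  apply/seteqP; split => w /=.
    case: (@sfval_cases _ _ _ s w hs) => [[_ ->]|[p [k1 k2 ->]]].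
      by rewrite lte_fin ltNge c0.
    by rewrite lte_fin => cp; exists p.
  move=> [p [k1 k2 k3]].
  case: (@sfval_cases _ _ _ s w hs) => [[h _]|[q [q1 q2 ->]]]; first by exfalso; apply: (h p).
  have -> : q = p; last by rewrite lte_fin.
  apply: contrapT => qp.
  have [i hi ei] : exists2 i, (i < size s)%N & nth (0, set0) s i = p.
    by apply/nthP.
  have [j hj ej] : exists2 j, (j < size s)%N & nth (0, set0) s j = q.
    by apply/nthP.
  case: hs => _ _ hd.
  have : i != j by apply/eqP => ij; apply: qp; rewrite -ej -ei ij.
  rewrite neq_ltn => /orP [ij|ji].
    have := hd i j; rewrite ij hj => /(_ isT); rewrite ei ej => e.
    by have : (p.2 `&` q.2) w by []; rewrite e.
  have := hd j i; rewrite ji hi => /(_ isT); rewrite ei ej => e.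
  by have : (q.2 `&` p.2) w by []; rewrite e.
apply: S_union_list => p hp; by case: hs => _ + _; apply.
Qed.


Variable sn : nat -> seq (R * set Omega).
Hypotheses (hsn : forall n, srep (sn n))
  (hcv : forall w, (fun n => sfval (sn n) w) @ \oo --> f w).

Lemma S_gt (b : R) : 0 <= b -> S [set w | (b%:E < f w)%E].
Proof.
move=> b0; pose c k := b + k.+1%:R^-1.
have -> : [set w | (b%:E < f w)%E] =
  \bigcup_k \bigcup_N \bigcap_n [set w | ((c k)%:E < sfval (sn (N + n)%N) w)%E].
  apply/seteqP; split => w /=.
    move=> hb.
    have [k hk] : exists k, ((c k)%:E < f w)%E.
      move: hb; case: (f w) => [r| |] //.
        by rewrite lte_fin => /ltr_add_invr [k hk]; exists k; rewrite lte_fin.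
      by move=> _; exists 0%N; rewrite ltry.
    have ev : \forall n \near \oo, ((c k)%:E < sfval (sn n) w)%E.
      exact: (hcv w _ (open_ereal_gt' hk)).
    case: ev => N _ hN; exists k => //; exists N => // n _; apply: hN => /=.
    by rewrite leq_addr.
  move=> [k _ [N _ hN]].
  have : ((c k)%:E <= f w)%E.
    apply: (cvge_to_ge (hcv w)); exists N => // n /= hn.
    have := hN (n - N)%N I; rewrite subnKC //; exact: ltW.
  move=> hle; apply: (@lt_le_trans _ _ (c k)%:E) => //.
  by rewrite lte_fin /c ltrDl invr_gt0.
have c0 : forall k, 0 <= c k by move=> k; rewrite /c addr_ge0 // invr_ge0.
clearbody c.
apply: (@srbigU _ _ hS) => k; apply: (@srbigU _ _ hS) => N; apply: (@srbigI _ _ hS) => n.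
by apply: S_sfval_gt.
Qed.

Lemma S_ge (a : R) : 0 < a -> S [set w | (a%:E <= f w)%E].
Proof.
move=> a0.
have -> : [set w | (a%:E <= f w)%E] =
  \bigcap_k [set w | ((Num.max 0 (a - k.+1%:R^-1))%:E < f w)%E].
  apply/seteqP; split => w /=.
    move=> ha k _ /=; apply: (@lt_le_trans _ _ a%:E) => //; rewrite lte_fin gt_max a0 /=.
    by rewrite ltrBlDr ltrDl invr_gt0.
  move=> h; have {}h : forall k, ((Num.max 0 (a - k.+1%:R^-1))%:E < f w)%E.
    by move=> k; exact: (h k I).
  rewrite leNgt; apply/negP => hf.
  have := f0 w; move: hf h; case: (f w) => [r| |] //.
  rewrite lte_fin => /ltr_add_invr [k hk] h r0.
  have := h k; rewrite lte_fin gt_max => /andP [_].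
  by rewrite ltrBlDr ltNge (ltW hk).
apply: (@srbigI _ _ hS) => k; apply: S_gt; by rewrite le_max lexx.
Qed.


Definition Lg (v : R) := [set w | (v%:E <= f w)%E].
Definition levrep (V : seq R) : seq (R * set Omega) :=
  foldr (fun v acc => (v, Lg v) :: map (fun p => (p.1, p.2 `\` Lg v)) acc) [::] V.
Definition levf (V : seq R) (w : Omega) : R :=
  foldr (fun v acc => if (v%:E <= f w)%E then v else acc) 0 V.

Lemma levrep_rep V : (forall v, v \in V -> 0 < v) -> srep (levrep V).
Proof.
elim: V => [|v V IH] hV /=; first exact: simple_rep_nil.
have v0 : 0 < v by apply: hV; rewrite mem_head.
apply/simple_rep_cons; split.
- exact: ltW.
- exact: S_ge.
- move=> p /mapP [q _ ->] /=.
  by apply/seteqP; split => // w [a [_ b]].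
- apply: simple_rep_diff => //; last exact: S_ge.
  by apply: IH => u hu; apply: hV; rewrite in_cons hu orbT.
Qed.

Lemma sfval_map_diff (s : seq (R * set Omega)) B w : ~ B w ->
  sfval (map (fun p => (p.1, p.2 `\` B)) s) w = sfval s w.
Proof.
move=> hB; rewrite /sfval big_map; congr (_%:E); apply: eq_bigr => p _ /=.
rewrite !indicE; have [h|h] := pselect (p.2 w).
  by rewrite !mem_set.
by rewrite !memNset // => -[].
Qed.

Lemma sfval_levrep V w : sfval (levrep V) w = (levf V w)%:E.
Proof.
elim: V => [|v V IH] /=; first exact: sfval_nil.
rewrite sfval_cons; case: ifP => hv.
  rewrite sfval_out; first by rewrite indicE mem_set // mulr1 adde0.
  by move=> p /mapP [q _ ->] /= [].
have nv : ~ Lg v w by rewrite /Lg /= hv.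
by rewrite indicE memNset // mulr0 add0e sfval_map_diff.
Qed.

Lemma levf_le V w : ((levf V w)%:E <= f w)%E.
Proof. by elim: V => [|v V IH] /=; [apply: f0|case: ifP]. Qed.

Lemma levf_cases V w : levf V w = 0 \/ levf V w \in V.
Proof.
elim: V => [|v V IH] /=; first by left.
case: ifP => _; first by right; rewrite mem_head.
by case: IH => [->|h]; [left|right; rewrite in_cons h orbT].
Qed.

Lemma levf_max V w v : sorted (fun x y : R => y <= x) V -> v \in V ->
  (v%:E <= f w)%E -> v <= levf V w.
Proof.
elim: V => [|u V IH] //= hs; rewrite in_cons => /orP [/eqP ->|hv] hvf.
  by rewrite hvf.
have hall : all (fun y => y <= u) V.
  by apply: (order_path_min _ hs) => x y z h1 h2; apply: le_trans h2 h1.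
case: ifP => hu.
  by have := allP hall v hv.
by apply: IH => //; apply: path_sorted hs.
Qed.

End Level.

Section Main.
Variables (R : realType) (Omega : Type) (tau : dfun R -> dfun R -> dfun R)
  (S : set (set Omega)) (gamma : set Omega -> dfun R) (f : Omega -> \bar R)
  (E : set Omega).
Hypotheses (htau : triangle_function tau) (hdist : distributive_tf tau)
  (hS : sigma_ring_of S) (hgam : tau_decomposable tau S gamma)
  (f0 : forall w, (0 <= f w)%E) (hE : S E).

Local Notation SfE' := (@SfE R Omega S f E).
Local Notation sint' := (@sint R Omega tau gamma E).
Local Notation pinf' := (@pinf R Omega tau S gamma f E).
Local Notation tf := (@tf_integral R Omega tau S gamma f E).

Lemma sfe_dp {s} : SfE' s -> delta_plus (sint' s).
Proof. by rewrite /SfE /= => -[hs _]; apply: (@sint_dp _ _ tau S gamma htau hS hgam E s hE hs). Qed.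

Lemma sfe_nil : SfE' [::].
Proof. by rewrite /SfE /=; split; [exact: simple_rep_nil|move=> w _; rewrite sfval_nil]. Qed.

Lemma Aset_ne x : [set sint' s x | s in SfE'] !=set0.
Proof. by exists (sint' [::] x), [::]; [exact: sfe_nil|]. Qed.

Lemma Aset_lb x : has_lbound [set sint' s x | s in SfE'].
Proof.
exists 0 => _ [s hs <-].
by have /andP[] := @dp_bnd _ _ x (sfe_dp hs).
Qed.

Lemma pinf_le {s} x : SfE' s -> pinf' x <= sint' s x.
Proof. by move=> hs; apply: ge_inf; [exact: Aset_lb|exists s]. Qed.

Lemma pinf_ge0 x : 0 <= pinf' x.
Proof.
apply: lb_le_inf; first exact: Aset_ne.
move=> _ [s hs <-]; by have /andP[] := @dp_bnd _ _ x (sfe_dp hs).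
Qed.

Lemma pinf_le1 x : pinf' x <= 1.
Proof.
apply: le_trans (pinf_le x sfe_nil) _.
by have /andP[] := @dp_bnd _ _ x (sfe_dp sfe_nil).
Qed.

Lemma pinf_mono x y : (x <= y)%E -> pinf' x <= pinf' y.
Proof.
move=> xy; apply: lb_le_inf; first exact: Aset_ne.
move=> _ [s hs <-]; apply: le_trans (pinf_le x hs) _.
exact: (@dp_mono _ _ _ _ (sfe_dp hs)).
Qed.

Lemma pinf_approx y e : 0 < e -> exists s, SfE' s /\ sint' s y < pinf' y + e.
Proof.
move=> e0; have [_ [s hs <-] h] := inf_adherent e0 (conj (Aset_ne y) (Aset_lb y)).
by exists s.
Qed.

Lemma tf_le x : tf x%:E <= pinf' x%:E.
Proof.
apply: ge_sup; first by exists (pinf' (x - 1)%:E), (x - 1) => //=; rewrite ltrBlDr ltrDl.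
move=> _ [y /= yx <-]; apply: pinf_mono; rewrite lee_fin; exact: ltW.
Qed.

Lemma tf_ge y x : y < x -> pinf' y%:E <= tf x%:E.
Proof.
move=> yx; apply: ub_le_sup; last by exists y.
by exists 1 => _ [z _ <-]; apply: pinf_le1.
Qed.


Variable sn : nat -> seq (R * set Omega).
Hypotheses (hsn : forall n, simple_rep (R:=R) S (sn n))
  (hcv : forall w, (fun n => sfval (sn n) w) @ \oo --> f w).

Lemma choose_ex (y : R) (m : nat) :
  {s : seq (R * set Omega) | SfE' s /\ sint' s y%:E < pinf' y%:E + m.+1%:R^-1}.
Proof. by apply: cid; apply: pinf_approx; rewrite invr_gt0. Qed.

Definition sk (k : nat) : seq (R * set Omega) :=
  match @unpickle (rat * nat)%type k with
  | Some (q, m) => proj1_sig (choose_ex (ratr q) m)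
  | None => [::] end.

Definition rq (k : nat) : R :=
  match @unpickle rat k with Some q => ratr q | None => 0 end.

Fixpoint raw (n : nat) : seq R :=
  if n is n'.+1 then rq n' :: map fst (sk n') ++ raw n' else [::].

Definition Vn n := sort (fun x y : R => y <= x) (seq.filter (fun v => 0 < v) (raw n)).
Definition hn n := levrep R Omega f (Vn n).

Lemma sk_sfe k : SfE' (sk k).
Proof.
rewrite /sk; case: (unpickle k) => [[q m]|]; last exact: sfe_nil.
by case: (choose_ex (ratr q) m) => s [].
Qed.

Lemma mem_Vn n v : (v \in Vn n) = (0 < v) && (v \in raw n).
Proof. by rewrite /Vn mem_sort mem_filter. Qed.

Lemma Vn_pos n v : v \in Vn n -> 0 < v.
Proof. by rewrite mem_Vn => /andP[]. Qed.

Lemma Vn_sorted n : sorted (fun x y : R => y <= x) (Vn n).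
Proof. by apply: sort_sorted => x y; rewrite orbC le_total. Qed.

Lemma raw_mono m n v : (m <= n)%N -> v \in raw m -> v \in raw n.
Proof.
elim: n => [|n IH]; first by rewrite leqn0 => /eqP ->.
rewrite leq_eqVlt => /orP [/eqP -> //|]; rewrite ltnS => mn hv.
by rewrite /= in_cons mem_cat IH ?orbT.
Qed.

Lemma raw_rq k : rq k \in raw k.+1.
Proof. by rewrite mem_head. Qed.

Lemma raw_sk k p : p \in sk k -> p.1 \in raw k.+1.
Proof. by move=> hp; rewrite /= in_cons mem_cat (map_f fst hp) orbT. Qed.

Lemma hn_sfe n : SfE' (hn n).
Proof.
split; first by apply: (@levrep_rep _ _ S f hS f0 sn hsn hcv); apply: Vn_pos.
by move=> w _; rewrite /hn sfval_levrep; apply: levf_le.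
Qed.

Lemma levf_ge0 n w : 0 <= levf R Omega f (Vn n) w.
Proof. by case: (@levf_cases _ _ f (Vn n) w) => [->|/Vn_pos /ltW]. Qed.

Lemma levf_geV n w v : v \in Vn n -> (v%:E <= f w)%E -> v <= levf R Omega f (Vn n) w.
Proof. by move=> hv hvf; apply: levf_max => //; apply: Vn_sorted. Qed.

Lemma levf_mono m n w : (m <= n)%N -> levf R Omega f (Vn m) w <= levf R Omega f (Vn n) w.
Proof.
move=> mn; case: (@levf_cases _ _ f (Vn m) w) => [->|hv]; first exact: levf_ge0.
apply: levf_geV; last exact: levf_le.
move: hv; rewrite !mem_Vn => /andP [-> h] /=; exact: raw_mono h.
Qed.


Lemma hn_ge_sk k n w : (k < n)%N -> E w -> (sfval (sk k) w <= sfval (hn n) w)%E.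
Proof.
move=> kn hw; have [hs hle] := sk_sfe k.
rewrite /hn sfval_levrep.
case: (@sfval_cases _ _ S (sk k) w hs) => [[_ ->]|[p [hp hpw he]]].
  by rewrite lee_fin levf_ge0.
rewrite he lee_fin.
have p0 : 0 <= p.1 by case: hs => + _ _; apply.
rewrite le_eqVlt in p0; case/orP: p0 => [/eqP <-|p0]; first exact: levf_ge0.
apply: levf_geV; last by rewrite -he; apply: hle.
by rewrite mem_Vn p0 /=; apply: (raw_mono _ _ _ kn); apply: raw_sk.
Qed.

Lemma hn_K w (a : R) : (a%:E < f w)%E ->
  exists N, forall n, (N <= n)%N -> a < levf R Omega f (Vn n) w.
Proof.
move=> af; have [a0|a0] := ltP a 0.
  by exists 0%N => n _; apply: lt_le_trans a0 (levf_ge0 n w).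
have [b [ab bf]] : exists b, a < b /\ (b%:E <= f w)%E.
  move: af; case: (f w) => [r| |] //.
    by rewrite lte_fin => ar; exists r.
  by move=> _; exists (a + 1); rewrite ltrDl ltr01 leey.
have [q hq] := rat_in_itvoo ab; move: hq; rewrite in_itv /= => /andP [aq qb].
exists (pickle q).+1 => n Nn.
apply: (lt_le_trans aq); apply: levf_geV.
  rewrite mem_Vn (le_lt_trans a0 aq) /=; apply: (raw_mono _ _ _ Nn).
  by have := raw_rq (pickle q); rewrite /rq pickleK.
by apply: le_trans bf; rewrite lee_fin ltW.
Qed.

Lemma hn_cvg w : (fun n => sfval (hn n) w) @ \oo --> f w.
Proof.
have -> : (fun n => sfval (hn n) w) = (fun n => (levf R Omega f (Vn n) w)%:E).
  by apply: funext => n; rewrite /hn sfval_levrep.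
have := f0 w; have := @hn_K w; have := @levf_le _ _ f f0 ^~ w.
case: (f w) => [r| |] // hle hK _.
- apply: cvg_EFin; first exact: nearW.
  apply/cvgrPdist_lt => e e0.
  have [N hN] := hK (r - e) (ltac:(by rewrite lte_fin ltrBlDr ltrDl)).
  exists N => // n /= Nn.
  have h1 := hN n Nn; have := hle (Vn n); rewrite lee_fin => h2.
  rewrite ger0_norm ?subr_ge0 //; lra.
- apply/cvgeyPgt => A.
  have [N hN] := hK A (ltry _).
  by exists N => // n /= Nn; rewrite lte_fin; apply: hN.
Qed.


Lemma hn_wconv : wconv (fun n => sint' (hn n)) tf.
Proof.
move=> x hcont; apply/cvgrPdist_lt => e e0.
have e20 : 0 < e / 2 by rewrite divr_gt0.
move/cvgrPdist_lt: hcont => /(_ _ e20) /nbhs_ballP [d /= d0 hd0].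
have hd : forall t, ball x d t -> `|tf x%:E - tf t%:E| < e / 2 := hd0.
clear hd0.
have [q hq] := rat_in_itvoo (ltr_pwDr d0 (lexx x)); move: hq.
rewrite in_itv /= => /andP [xq qd].
pose y : R := ratr q; have xy : x < y by []; have yd : y < x + d by [].
clear xq qd; pose z := (y + (x + d)) / 2.
have yz : y < z by rewrite /z; lra.
have htz : tf z%:E < tf x%:E + e / 2.
  have : ball x d z by rewrite -ball_normE /= distrC ger0_norm /z; lra.
  move/hd; rewrite ltr_norml => /andP [h1 _]; lra.
have [m hm] := ltr_add_invr e20; rewrite add0r in hm.
pose k := pickle (q, m).
have hsk : sint' (sk k) y%:E < pinf' y%:E + m.+1%:R^-1.
  by rewrite /sk /k pickleK; case: choose_ex => s [].
exists k.+1 => // n /= kn.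
have L1 : tf x%:E <= sint' (hn n) x%:E.
  exact: le_trans (tf_le x) (pinf_le _ (hn_sfe n)).
have U1 : sint' (hn n) x%:E <= sint' (hn n) y%:E.
  by apply: (@dp_mono _ _ _ _ (sfe_dp (hn_sfe n))); rewrite lee_fin ltW.
have U2 : sint' (hn n) y%:E <= sint' (sk k) y%:E.
  have [hs1 _] := sk_sfe k; have [hs2 _] := hn_sfe n.
  exact: (@sint_anti _ _ tau S gamma htau hdist hS hgam E (sk k) (hn n) hE hs1 hs2
    (fun w hw => hn_ge_sk k n w kn hw) y%:E).
have U3 : pinf' y%:E <= tf z%:E by apply: tf_ge.
rewrite distrC ger0_norm; last by rewrite subr_ge0; exact: L1.
change (sint' (hn n) x%:E - tf x%:E < e); rewrite ltrBlDl.
apply: (le_lt_trans U1); apply: (le_lt_trans U2); apply: (lt_le_trans hsk).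
have -> : tf x%:E + e = (tf x%:E + e / 2) + e / 2 by rewrite -addrA -splitr.
apply: lerD; last exact: ltW.
exact: le_trans U3 (ltW htz).
Qed.

Lemma main_exists : exists fn : nat -> seq (R * set Omega),
    [/\ (forall n, SfE' (fn n)),
        (forall n w, (sfval (fn n) w <= sfval (fn n.+1) w)%E),
        (forall w, (fun n => sfval (fn n) w) @ \oo --> f w) &
        wconv (fun n => sint' (fn n)) tf].
Proof.
exists hn; split.
- exact: hn_sfe.
- by move=> n w; rewrite /hn !sfval_levrep lee_fin levf_mono.
- exact: hn_cvg.
- exact: hn_wconv.
Qed.

End Main.

Theorem theorem5p2 (R : realType) (Omega : Type)
  (tau : dfun R -> dfun R -> dfun R) (S : set (set Omega))
  (gamma : set Omega -> dfun R) (f : Omega -> \bar R) (E : set Omega) :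
  triangle_function tau -> continuous_tf tau -> distributive_tf tau ->
  (exists w : Omega, True) ->
  sigma_ring_of S ->
  tau_decomposable tau S gamma -> cont_from_below S gamma ->
  (forall w, (0 <= f w)%E) ->
  measurable_fn S f ->
  S E ->
  gamma_integrable tau S gamma f E ->
  exists fn : nat -> seq (R * set Omega),
    [/\ (forall n, SfE S f E (fn n)),
        (forall n w, (sfval (fn n) w <= sfval (fn n.+1) w)%E),
        (forall w, (fun n => sfval (fn n) w) @ \oo --> f w) &
        wconv (fun n => sint tau gamma E (fn n)) (tf_integral tau S gamma f E)].
Proof.
move=> htau _ hdist _ hS hgam _ f0 [sn [hsn hcv]] hE _.
exact: (@main_exists R Omega tau S gamma f E htau hdist hS hgam f0 hE sn hsn hcv).
Qed.
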